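(* Let $K$ be a field, $S=K[x_1,\ldots,x_n,y_1,\ldots,y_n]$ standard bigraded with $\deg x_i=(1,0)$, $\deg y_i=(0,1)$, let $>$ be the reverse lexicographic term order induced by $x_1>x_2>\cdots>x_n>y_1>\cdots>y_n$, and let $\phi:S\to S$ be the $K$-algebra homomorphism with $\phi(x_i)=x_i$ and $\phi(y_i)=x_i$. Let $f\in S$ be bihomogeneous of degree $(s,t)$ whose initial monomial is $\operatorname{in}(f)=x_{i_1}\cdots x_{i_s}y_{j_1}\cdots y_{j_t}$ with $i_1\leq\cdots\leq i_s\leq j_1\leq\cdots\leq j_t$. Then $\operatorname{in}(\phi(f))=\phi(\operatorname{in}(f))$ and $\operatorname{in}(f)=\phi(\operatorname{in}(f))^{(t)}$.
   Context: For a form $g=\sum_{1\le i_1\le\cdots\le i_e\le n}a_{i_1\cdots i_e}x_{i_1}\cdots x_{i_e}$ of degree $(e,0)$ and $0\le k\le e$, set $g^{(k)}=\sum a_{i_1\cdots i_e}x_{i_1}\cdots x_{i_{e-k}}y_{i_{e-k+1}}\cdots y_{i_e}$ (replace the $k$ variables with largest indices by the corresponding $y$'s); in particular for a monomial $x_{i_1}\cdots x_{i_e}$ with $i_1\le\cdots\le i_e$, its $(k)$-version is $x_{i_1}\cdots x_{i_{e-k}}y_{i_{e-k+1}}\cdots y_{i_e}$. $\operatorname{in}(\cdot)$ denotes the initial monomial with respect to $>$. *)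

(* Defs.v *)
From mathcomp Require Import all_boot all_algebra.
From mathcomp Require Import mpoly.
Set Implicit Arguments. Unset Strict Implicit. Unset Printing Implicit Defensive.
Import GRing.Theory.
Local Open Scope ring_scope.

(* S = K[x_1..x_n, y_1..y_n] is {mpoly K[n + n]}: variable index k : 'I_(n+n),
   x_i = variable (lshift n i), y_i = variable (rshift n i)  (i : 'I_n, 0-based).
   The variable order x_1 > ... > x_n > y_1 > ... > y_n is: smaller index = larger. *)
Definition xv (n : nat) (i : 'I_n) : 'I_(n + n) := lshift n i.
Definition yv (n : nat) (i : 'I_n) : 'I_(n + n) := rshift n i.

Definition revlex_lt (N : nat) (u v : 'X_{1..N}) : Prop :=
  (mdeg u < mdeg v)%N \/
  (mdeg u = mdeg v /\
   exists k : 'I_N, (v k < u k)%N /\ forall j : 'I_N, (k < j)%N -> v j = u j).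

Definition is_initial (K : fieldType) (N : nat) (p : {mpoly K[N]}) (m : 'X_{1..N}) : Prop :=
  m \in msupp p /\ forall m', m' \in msupp p -> m' <> m -> revlex_lt m' m.

Definition bihomog (K : fieldType) (n : nat) (p : {mpoly K[n + n]}) (s t : nat) : Prop :=
  forall m, m \in msupp p ->
    (\sum_(i < n) m (xv i))%N = s /\ (\sum_(i < n) m (yv i))%N = t.

Definition phi_var (n : nat) (k : 'I_(n + n)) : 'I_(n + n) :=
  match split k with inl i => xv i | inr i => xv i end.
Definition phi (K : fieldType) (n : nat) (p : {mpoly K[n + n]}) : {mpoly K[n + n]} :=
  p \mPo [tuple ('X_(phi_var k) : {mpoly K[n + n]}) | k < n + n].

(* g^(k) for a form g of degree (e,0): for each monomial x_{i_1}...x_{i_e}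
   (i_1 <= ... <= i_e), replace the k variables with largest indices by y's. *)
Definition xindices (n : nat) (m : 'X_{1..n + n}) : seq 'I_n :=
  flatten [seq nseq (m (xv i)) i | i <- enum 'I_n].
Definition mono_k (K : fieldType) (n k : nat) (m : 'X_{1..n + n}) : {mpoly K[n + n]} :=
  let l := xindices m in
  (\prod_(i <- take (size l - k) l) 'X_(xv i)) *
  (\prod_(i <- drop (size l - k) l) 'X_(yv i)).
Definition kop (K : fieldType) (n k : nat) (g : {mpoly K[n + n]}) : {mpoly K[n + n]} :=
  \sum_(m <- msupp g) g@_m *: mono_k K k m.

(* Main.v *)
Require Import Defs.
From mathcomp Require Import all_boot all_algebra.
From mathcomp Require Import mpoly.
From mathcomp Require Import zify.
Set Implicit Arguments. Unset Strict Implicit. Unset Printing Implicit Defensive.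
Import GRing.Theory.
Local Open Scope ring_scope.

Section S.
Variables (K : fieldType) (n : nat).
Local Notation N := (n + n).

Lemma phi_var_x (j : 'I_n) : phi_var (xv j) = xv j.
Proof. by rewrite /phi_var /xv (unsplitK (inl j)). Qed.
Lemma phi_var_y (j : 'I_n) : phi_var (yv j) = xv j.
Proof. by rewrite /phi_var /yv (unsplitK (inr j)). Qed.

Definition phim (u : 'X_{1..N}) : 'X_{1..N} := (\sum_(k < N) U_(phi_var k) *+ u k)%MM.

Lemma phiX (u : 'X_{1..N}) : phi ('X_[u] : {mpoly K[N]}) = 'X_[phim u].
Proof.
rewrite /phi comp_mpolyX /phim -mprodXnE.
by apply: eq_bigr => k _; rewrite tnth_mktuple.
Qed.

Lemma phim_x (u : 'X_{1..N}) i : phim u (xv i) = (u (xv i) + u (yv i))%N.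
Proof.
rewrite /phim mnm_sumE big_split_ord /=.
have E : forall (g : 'I_n -> 'I_N), (\sum_(j < n) (U_(xv j) *+ u (g j))%MM (xv i))%N = u (g i).
  move=> g; rewrite (bigD1 i) //= mulmnE mnm1E eqxx mul1n big1 ?addn0 // => j ji.
  by rewrite mulmnE mnm1E (inj_eq (@lshift_inj _ _)) (negbTE ji).
rewrite -(E (@xv n)) -(E (@yv n)); congr (_ + _)%N; apply: eq_bigr => j _.
  by rewrite -?/(xv j) ?phi_var_x.
  by have := phi_var_y j; rewrite /yv => ->.
Qed.

Lemma phim_y (u : 'X_{1..N}) i : phim u (yv i) = 0%N.
Proof.
rewrite /phim mnm_sumE big1 // => k _; rewrite mulmnE mnm1E /phi_var.
case: split => j; by rewrite /xv /yv eq_lrshift.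
Qed.


Definition sx (u : 'X_{1..N}) := (\sum_(i < n) u (xv i))%N.
Definition sy (u : 'X_{1..N}) := (\sum_(i < n) u (yv i))%N.

Lemma mdeg_s u : mdeg u = (sx u + sy u)%N.
Proof. by rewrite mdegE big_split_ord. Qed.

Lemma mdeg_phim u : mdeg (phim u) = (sx u + sy u)%N.
Proof.
rewrite mdegE big_split_ord /= (eq_bigr (fun i => 0%N) (fun i _ => phim_y u i)).
rewrite big_const_ord iter_addn_0 mul0n addn0 /sx /sy -big_split /=.
by apply: eq_bigr => i _; rewrite phim_x.
Qed.

Lemma Glem (u v : 'X_{1..N}) (k0 : 'I_N) :
  (forall j : 'I_N, (k0 <= j)%N -> (v j <= u j)%N) -> (v k0 < u k0)%N ->
  exists k : 'I_N, (v k < u k)%N /\ forall j : 'I_N, (k < j)%N -> v j = u j.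
Proof.
move=> Hle Hlt.
have P0 : (k0 <= k0)%N && (v k0 != u k0) by rewrite leqnn neq_ltn Hlt.
case: (@arg_maxnP _ k0 (fun j : 'I_N => (k0 <= j)%N && (v j != u j)) (fun j : 'I_N => val j) P0) => k /andP [Hk0 Hne] Hmax.
exists k; split.
  by rewrite ltn_neqAle Hne Hle.
move=> j Hkj; apply/eqP; have Hk0j : (k0 <= j)%N by rewrite (leq_trans Hk0) // ltnW.
apply: contraTT Hkj => Hj.
by rewrite -leqNgt; apply: Hmax; rewrite Hj Hk0j.
Qed.

Lemma xv_val (a : 'I_n) : nat_of_ord (xv a) = nat_of_ord a. Proof. by []. Qed.
Lemma yv_val (a : 'I_n) : nat_of_ord (yv a) = (n + a)%N. Proof. by []. Qed.

Lemma key (m m0 : 'X_{1..N}) :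
  (forall a b : 'I_n, (0 < m (xv a))%N -> (0 < m (yv b))%N -> (a <= b)%N) ->
  sx m0 = sx m -> sy m0 = sy m -> revlex_lt m0 m -> revlex_lt (phim m0) (phim m).
Proof.
move=> P1 Ex Ey [|[_ [k [Hk Heq]]]].
  by rewrite !mdeg_s Ex Ey ltnn.
right; split; first by rewrite !mdeg_phim Ex Ey.
case: (split_ordP k) => l El; subst k.
-
  apply: (@Glem _ _ (xv l)) => [j|]; last first.
    rewrite !phim_x (Heq (yv l)) ?ltn_add2r // yv_val xv_val.
    by have := ltn_ord l; lia.
  case: (split_ordP j) => l' ->; first last.
    by rewrite !phim_y.
  rewrite !phim_x xv_val => Hll'.
  case: (ltngtP l l') Hll' => // [Hlt|E] _.
    rewrite (Heq (yv l')); last by rewrite yv_val xv_val; have := ltn_ord l; lia.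
    by rewrite (Heq (xv l')) // !xv_val.
  have E' : l' = l by apply: val_inj.
  subst l'; rewrite (Heq (yv l)); last by rewrite yv_val xv_val; have := ltn_ord l; lia.
  by rewrite leq_add2r ltnW.
- have Hyle : forall l' : 'I_n, (l <= l')%N -> (m (yv l') <= m0 (yv l'))%N.
    move=> l'; case: (ltngtP l l') => // [Hlt|E] _.
      by rewrite (Heq (yv l')) // !yv_val ltn_add2l.
    have -> : l' = l by apply: val_inj.
    exact: ltnW.
  have [l1 [Hl1 Hpos]] : exists l1 : 'I_n, (l1 < l)%N /\ (0 < m (yv l1))%N.
    case: (boolP [exists l1 : 'I_n, (l1 < l)%N && (0 < m (yv l1))%N]).
      by case/existsP => l1 /andP [H1 H2]; exists l1.
    rewrite negb_exists => /forallP H0.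
    have : (sy m < sy m0)%N.
      rewrite /sy (bigD1 l) // [X in (_ < X)%N](bigD1 l) //= -addSn leq_add //.
      apply: leq_sum => i Hi; case: (ltngtP i l) => [Hil|Hil|E].
      + by have := H0 i; rewrite Hil /= lt0n negbK => /eqP ->.
      + exact: Hyle (ltnW Hil).
      + by move: Hi; rewrite (val_inj E) eqxx.
    by rewrite Ey ltnn.
  have Hx0 : forall l' : 'I_n, (l <= l')%N -> m (xv l') = 0%N.
    move=> l' Hl'; apply/eqP; rewrite -leqn0 leqNgt; apply/negP => Hp.
    have := P1 _ _ Hp Hpos; lia.
  apply: (@Glem _ _ (xv l)) => [j|]; last first.
    by rewrite !phim_x Hx0 // add0n (leq_trans Hk) // leq_addl.
  case: (split_ordP j) => l' ->; first last.
    by rewrite !phim_y.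
  rewrite !phim_x xv_val => Hll'.
  by rewrite Hx0 // add0n (leq_trans (Hyle _ Hll')) // leq_addl.
Qed.

Definition rle := relpre (@nat_of_ord n) leq.

Lemma rle_trans : transitive rle.
Proof. by move=> a b c; rewrite /rle /=; apply: leq_trans. Qed.

Lemma pairwise_nseq c (x : 'I_n) : pairwise rle (nseq c x).
Proof.
elim: c => //= c IH; rewrite IH andbT; apply/allP => y.
by rewrite mem_nseq => /andP [_ /eqP ->]; rewrite /rle /= leqnn.
Qed.

Lemma flat_sorted (c : 'I_n -> nat) (e : seq 'I_n) :
  sorted (relpre (@nat_of_ord n) ltn) e ->
  pairwise rle (flatten [seq nseq (c i) i | i <- e]).
Proof.
rewrite sorted_pairwise; last by move=> a b d; rewrite /=; apply: ltn_trans.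
elim: e => //= x e IH /andP [Hx He].
rewrite pairwise_cat pairwise_nseq (IH He) !andbT.
apply/allrelP => a b; rewrite mem_nseq => /andP [_ /eqP ->].
case/flattenP => bl /mapP [y Hy ->]; rewrite mem_nseq => /andP [_ /eqP ->].
by rewrite /rle /=; apply: ltnW; exact: (allP Hx).
Qed.

Lemma count_flat (s : seq 'I_n) x :
  count_mem x (flatten [seq nseq (count_mem i s) i | i <- enum 'I_n]) = count_mem x s.
Proof.
rewrite count_flatten sumnE !big_map.
rewrite -enumT big_enum /=.
rewrite (eq_bigr (fun i => if i == x then count_mem i s else 0%N)); last first.
  by move=> i _; rewrite count_nseq /=; case: (i == x); rewrite ?mul1n ?mul0n.
by rewrite -big_mkcond big_pred1_eq.
Qed.

Lemma flat_eq (s : seq 'I_n) : sorted rle s ->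
  flatten [seq nseq (count_mem i s) i | i <- enum 'I_n] = s.
Proof.
move=> Hs; apply: (sorted_eq rle_trans) => //.
- move=> a b /andP [H1 H2]; apply: val_inj; apply/eqP; rewrite eqn_leq; apply/andP; split; [exact: H1 | exact: H2].
- rewrite sorted_pairwise; last exact: rle_trans.
  apply: flat_sorted; have := iota_ltn_sorted 0 n; rewrite -val_enum_ord sorted_map; exact.
- by apply/allP => x _; rewrite /= count_flat.
Qed.

Lemma mX_inj (u v : 'X_{1..N}) : ('X_[u] : {mpoly K[N]}) = 'X_[v] -> u = v.
Proof.
move=> E; move: (congr1 (mcoeff u) E); rewrite !mcoeffX eqxx.
case: eqP => // _ /eqP; rewrite /= ?mulr1n ?mulr0n oner_eq0 //.
Qed.

Lemma revlex_irr (u : 'X_{1..N}) : ~ revlex_lt u u.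
Proof. by case=> [H|[_ [k [H _]]]]; rewrite ltnn in H. Qed.

Lemma phi_coef (f : {mpoly K[N]}) w :
  (phi f)@_w = \sum_(m0 <- msupp f) f@_m0 * (phim m0 == w)%:R.
Proof.
rewrite {1}/phi comp_mpolyEX raddf_sum; apply: eq_bigr => m0 _.
have := phiX m0; rewrite /phi => ->.
by change ((f@_m0 *: 'X_[phim m0])@_w = f@_m0 * (phim m0 == w)%:R); rewrite mcoeffZ mcoeffX.
Qed.

Lemma counts (s t : nat) (m : 'X_{1..N}) (I : s.-tuple 'I_n) (J : t.-tuple 'I_n) :
  ('X_[m] : {mpoly K[N]}) = (\prod_(i <- I) 'X_(xv i)) * (\prod_(j <- J) 'X_(yv j)) ->
  forall i, m (xv i) = count_mem i I /\ m (yv i) = count_mem i J.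
Proof.
rewrite (mprodXE K (fun i => U_(xv i)%MM)) (mprodXE K (fun i => U_(yv i)%MM)) -mpolyXD.
move=> /mX_inj -> i; rewrite !mnmDE !mnm_sumE -!sum1_count.
split.
- rewrite [X in (_ + X)%N]big1 ?addn0; last by move=> j _; rewrite mnm1E eq_rlshift.
  by rewrite [RHS]big_mkcond; apply: eq_bigr => j _; rewrite mnm1E eq_lshift /=; case: eqP.
- rewrite [X in (X + _)%N]big1 ?add0n; last by move=> j _; rewrite mnm1E eq_lrshift.
  by rewrite [RHS]big_mkcond; apply: eq_bigr => j _; rewrite mnm1E eq_rshift /=; case: eqP.
Qed.
End S.

Theorem lemma3p4 (K : fieldType) (n s t : nat) (f : {mpoly K[n + n]})
  (m : 'X_{1..n + n}) (I : s.-tuple 'I_n) (J : t.-tuple 'I_n) :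
  bihomog f s t ->
  is_initial f m ->
  sorted leq (map val I ++ map val J) ->
  ('X_[m] : {mpoly K[n + n]}) = (\prod_(i <- I) 'X_(xv i)) * (\prod_(j <- J) 'X_(yv j)) ->
  (exists m' : 'X_{1..n + n}, is_initial (phi f) m' /\ ('X_[m'] : {mpoly K[n + n]}) = phi ('X_[m] : {mpoly K[n + n]}))
  /\ ('X_[m] : {mpoly K[n + n]}) = kop t (phi ('X_[m] : {mpoly K[n + n]})).
Proof.
move=> Hbi [Hm Hinit] Hsort H4.
have Hc := counts H4.
have Hsrt : sorted (@rle n) (I ++ J) by rewrite -sorted_map map_cat.
have P1 : forall a b : 'I_n, (0 < m (xv a))%N -> (0 < m (yv b))%N -> (a <= b)%N.
  move=> a b; rewrite (proj1 (Hc a)) (proj2 (Hc b)) -!has_count !has_pred1 => Ha Hb.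
  move: Hsrt; rewrite sorted_pairwise; last exact: rle_trans.
  by rewrite pairwise_cat => /andP [/allrelP H _]; exact: H.
have Hs : forall m0, m0 \in msupp f -> sx m0 = sx m /\ sy m0 = sy m.
  move=> m0 H0; have [A B] := Hbi _ H0; have [C D] := Hbi _ Hm.
  by rewrite /sx /sy A B C D.
split.
  exists (phim m); split; last by rewrite phiX.
  split.
    rewrite mcoeff_msupp phi_coef (big_rem m Hm) /= big1_seq ?addr0.
      by rewrite eqxx mulr1 -mcoeff_msupp.
    move=> m0 /andP [_ Hin].
    rewrite (mem_rem_uniq m (msupp_uniq f)) inE in Hin; case/andP: Hin => Hne Hin0.
    have [E1 E2] := Hs _ Hin0.
    have Hne' : m0 <> m by move/eqP; rewrite (negbTE Hne).
    have := key P1 E1 E2 (Hinit m0 Hin0 Hne').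
    by case: eqP => [->|]; [move/revlex_irr | rewrite mulr0].
  move=> w Hw Hne; rewrite mcoeff_msupp phi_coef in Hw.
  have [m0 Hm0 Ew] : exists2 m0, m0 \in msupp f & phim m0 = w.
    case: (boolP (has (fun m0 => phim m0 == w) (msupp f))) => [/hasP [m0 H0 /eqP E]|/hasPn H].
      by exists m0.
    by rewrite big1_seq ?eqxx // in Hw => m0 /andP [_ /H /negbTE ->]; rewrite mulr0.
  subst w; have Hne0 : m0 <> m by move=> E; apply: Hne; rewrite E.
  have [E1 E2] := Hs _ Hm0.
  exact: key P1 E1 E2 (Hinit m0 Hm0 Hne0).
rewrite phiX /kop msuppX big_seq1 mcoeffX eqxx scale1r /mono_k.
have Hx : xindices (phim m) = I ++ J.
  rewrite /xindices -[RHS](flat_eq Hsrt); congr flatten; apply: eq_map => i /=.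
  by rewrite phim_x (proj1 (Hc i)) (proj2 (Hc i)) count_cat.
rewrite Hx size_cat !size_tuple addnK take_size_cat ?size_tuple //.
by rewrite drop_size_cat ?size_tuple.
Qed.
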